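(* Let $n\ge1$, $p$ a prime dividing $n$, and $\prec$ any term order on the monomials of $\mathbb{C}[x_1,\ldots,x_n]$. Then $\mathrm{Sm}(\prec,B_i)=\mathrm{Min}(\prec)$ for each $0\le i\le p-1$.
   Context: $\omega_1=e^{2\pi i/p}$, $\omega_j=\omega_1^j$; $B=\{1,\omega_1,\ldots,\omega_{p-1}\}^n$, $B_j=\{(t_1,\ldots,t_n)\in B: t_1\cdots t_n=\omega_j\}$. $D=\{x_1^{u_1}\cdots x_n^{u_n}: 0\le u_i\le p-1\}$; on $D$, $x^u\equiv x^v$ iff there is $0\le k\le p-1$ with $u_i+k\equiv v_i\pmod p$ for all $i$. $\mathrm{Min}(\prec)$ is the set of monomials in $D$ that are the $\prec$-minimal element of their $\equiv$-class. $\mathrm{Sm}(\prec,X)$ is the set of monomials that are not the $\prec$-leading monomial of any nonzero polynomial vanishing on $X$. *)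

(* Defs.v *)
From HB Require Import structures.
From mathcomp Require Import all_boot all_order all_algebra.
Set Implicit Arguments. Unset Strict Implicit. Unset Printing Implicit Defensive.
Import Order.TTheory GRing.Theory Num.Theory.
Local Open Scope ring_scope.

Definition mono (n : nat) := {ffun 'I_n -> nat}.
Definition mono_one (n : nat) : mono n := [ffun => 0%N].
Definition mono_mul (n : nat) (a b : mono n) : mono n := [ffun i => (a i + b i)%N].

Definition is_term_order (n : nat) (le : rel (mono n)) : Prop :=
  [/\ reflexive le, antisymmetric le, transitive le & total le] /\
  (forall m, le (mono_one n) m) /\
  (forall a b c, le a b -> le (mono_mul a c) (mono_mul b c)).

Record mpoly (C : nzRingType) (n : nat) := MPoly {
  mcoef : mono n -> C;
  msupp : seq (mono n);
  msuppP : forall m, mcoef m != 0 -> m \in msupp }.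

Definition mono_eval (C : comNzRingType) (n : nat) (m : mono n) (t : 'I_n -> C) : C :=
  \prod_(i < n) t i ^+ m i.

Definition mpoly_eval (C : comNzRingType) (n : nat) (f : mpoly C n) (t : 'I_n -> C) : C :=
  \sum_(m <- undup (msupp f)) mcoef f m * mono_eval m t.

Definition is_lead_mono (C : nzRingType) (n : nat) (le : rel (mono n))
    (f : mpoly C n) (m : mono n) : Prop :=
  mcoef f m != 0 /\ (forall m', mcoef f m' != 0 -> le m' m).

Definition Sm (C : comNzRingType) (n : nat) (le : rel (mono n))
    (X : ('I_n -> C) -> Prop) (m : mono n) : Prop :=
  ~ (exists f : mpoly C n,
        (forall t, X t -> mpoly_eval f t = 0) /\ is_lead_mono le f m).

Definition inD (n p : nat) (u : mono n) : Prop := forall i, (u i <= p - 1)%N.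

Definition mono_equiv (n p : nat) (u v : mono n) : Prop :=
  exists2 k : nat, (k <= p - 1)%N & forall i, (u i + k = v i %[mod p])%N.

Definition Min (n p : nat) (le : rel (mono n)) (u : mono n) : Prop :=
  inD p u /\ (forall v, inD p v -> mono_equiv p u v -> le u v).

(* omega_1 = e^{2 pi i / p}: p.-root (-1) is the p-th root of -1 of least
   nonnegative argument, i.e. e^{i pi/p}; its square is e^{2 pi i/p}. *)
Definition omega1 (C : numClosedFieldType) (p : nat) : C := (p.-root (-1)) ^+ 2.
Definition omega (C : numClosedFieldType) (p j : nat) : C := omega1 C p ^+ j.

Definition inB (C : numClosedFieldType) (n p : nat) (t : 'I_n -> C) : Prop :=
  forall i, exists2 k : nat, (k <= p - 1)%N & t i = omega C p k.

Definition inBj (C : numClosedFieldType) (n p j : nat) (t : 'I_n -> C) : Prop :=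
  inB p t /\ \prod_(i < n) t i = omega C p j.

(* Main.v *)
Require Import Defs.
From HB Require Import structures.
From mathcomp Require Import all_boot all_order all_algebra.
From mathcomp Require Import zify.
Import Order.TTheory GRing.Theory Num.Theory.
Local Open Scope ring_scope.
Set Implicit Arguments. Unset Strict Implicit.

Lemma unity_ne1 (C : numClosedFieldType) (n : nat) : (1 < n)%N ->
  exists2 w : C, w ^+ n = 1 & w != 1.
Proof.
move=> n_gt1; have [|w /eqP pw_0] := closed_rootP (\poly_(i < n) (1 : C)) _.
  by rewrite size_poly_eq ?oner_eq0 // -(subnKC n_gt1).
rewrite horner_poly (eq_bigr _ (fun _ _ => mul1r _)) in pw_0.
exists w; first by apply/eqP; rewrite -subr_eq0 subrX1 pw_0 mulr0.
apply/eqP => w1; move: pw_0; rewrite w1.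
rewrite (eq_bigr (fun _ => 1)) ?sumr_const ?card_ord; last by move=> i _; rewrite expr1n.
by move/eqP; rewrite pnatr_eq0 -(subnKC n_gt1).
Qed.

Lemma root_N1_neq (C : numClosedFieldType) (p : nat) : (2 < p)%N -> odd p ->
  p.-root (-1 : C) != -1.
Proof.
move=> p_gt2 odd_p; apply/eqP => r1.
have p_gt1 : (1 < p)%N by apply: ltnW.
have [w wp w1] := unity_ne1 C p_gt1.
have Nm1 : (-1 : C) ^+ p = -1 by rewrite -signr_odd odd_p expr1.
set y0 := - w.
have y0p : y0 ^+ p = -1 by rewrite /y0 exprNn wp mulr1 Nm1.
have y0n : y0 != -1 by rewrite /y0 eqr_opp.
have [y [yp yn yIm]] : exists y : C, [/\ y ^+ p = -1, y != -1 & 0 <= 'Im y].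
  case: (boolP (0 <= 'Im y0)) => h.
    by exists y0; split.
  idtac.
  exists y0^*; split.
  - by rewrite -rmorphXn y0p rmorphN1.
  - by apply: contra y0n => /eqP e; rewrite -(conjCK y0) e conjCN1.
  - rewrite Im_conj oppr_ge0.
    by have := Creal_Im y0; rewrite realE (negbTE h).
have hRe := rootC_Re_max (ltnW p_gt1) yp yIm.
rewrite r1 in hRe.
have ReN1 : 'Re (-1 : C) = -1.
  by apply/Creal_ReP; rewrite rpredN rpred1.
rewrite ReN1 in hRe.
have ny : `|y| = 1.
  apply/eqP; rewrite -(pexpr_eq1 (n:=p)) ?normr_ge0 ?(ltnW p_gt1) //.
  by rewrite -normrX yp normrN1.
have hle := (leif_normC_Re_Creal y).1.
rewrite ny in hle.
have hReR := Creal_Re y.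
have : -1 <= 'Re y by move: hle; rewrite real_ler_norml // => /andP[].
move=> hge.
have eRe : 'Re y = -1 by apply/eqP; rewrite eq_le hRe hge.
have := (leif_normC_Re_Creal y).2.
rewrite eRe normrN1 ny eqxx. move=> yR.
by move: yn; rewrite -(Creal_ReP _ (esym yR)) eRe eqxx.
Qed.

Lemma omega1_neq1 (C : numClosedFieldType) (p : nat) : prime p -> omega1 C p != 1.
Proof.
move=> pp; rewrite /omega1.
have p_gt1 := prime_gt1 pp.
have rp : (p.-root (-1 : C)) ^+ p = -1 by rewrite rootCK // ltnW.
have N1n1 : (-1 : C) != 1.
  by rewrite -subr_eq0 -opprD oppr_eq0 (_ : 1 + 1 = 2%:R) // pnatr_eq0.
case: (boolP (p == 2)) => [/eqP p2 | p2].
  by move: rp; rewrite p2 => ->.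
have odd_p : odd p by case: (even_prime pp) => // e; rewrite e in p2.
have p_gt2 : (2 < p)%N by rewrite ltn_neqAle eq_sym p2 prime_gt1.
apply/eqP => r21.
have rr : (p.-root (-1 : C)) ^+ p = p.-root (-1).
  set r := p.-root _.
  rewrite -{1}(odd_double_half p) odd_p exprD expr1 -mul2n exprM r21 expr1n mulr1 //.
move: (root_N1_neq C p_gt2 odd_p); rewrite -rr rp eqxx //.
Qed.

Lemma omega_prim (C : numClosedFieldType) (p : nat) : prime p ->
  p.-primitive_root (omega1 C p).
Proof.
move=> pp; have p_gt0 := prime_gt0 pp.
have op : omega1 C p ^+ p = 1.
  by rewrite /omega1 -exprM mulnC exprM (rootCK p_gt0) sqrrN expr1n.
have [m pm mp] := prim_order_exists p_gt0 op.
have H := (primeP pp).2 m mp.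
case/orP: H => /eqP em; last by rewrite em in pm.
rewrite em in pm; have := prim_expr_order pm; rewrite expr1 => e1.
by move: (omega1_neq1 C pp); rewrite e1 eqxx.
Qed.


Lemma omega_pow (C : numClosedFieldType) (p : nat) : prime p ->
  omega1 C p ^+ p = 1.
Proof. by move=> pp; apply: prim_expr_order (omega_prim C pp). Qed.

Lemma pow_congr (C : numClosedFieldType) (p : nat) (t : C) (a b : nat) :
  prime p -> (exists k, t = omega1 C p ^+ k) -> (a = b %[mod p])%N ->
  t ^+ a = t ^+ b.
Proof.
move=> pp [k ->] e; rewrite -!(exprM (omega1 C p)).
apply/eqP; rewrite (eq_prim_root_expr (omega_prim C pp)).
by apply/eqP; rewrite -modnMmr e modnMmr.
Qed.

Lemma binom_proof (C : nzRingType) (n : nat) (a b : mono n) (c : C) :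
  forall w, (w == a)%:R - (w == b)%:R * c != 0 -> w \in [:: a; b].
Proof.
move=> w; rewrite !inE; case: (w == a) => //; case: (w == b) => //.
by rewrite mul0r subr0 eqxx.
Qed.

Definition binom (C : nzRingType) (n : nat) (a b : mono n) (c : C) : mpoly C n :=
  @MPoly C n (fun w => (w == a)%:R - (w == b)%:R * c) [:: a; b] (@binom_proof C n a b c).

Lemma binom_eval (C : comNzRingType) (n : nat) (a b : mono n) (c : C) t :
  a != b -> mpoly_eval (binom a b c) t = mono_eval a t - c * mono_eval b t.
Proof.
move=> ab; rewrite /mpoly_eval /= inE (negbTE ab) /= big_cons big_seq1 /=.
rewrite eqxx (negbTE ab) eq_sym (negbTE ab) eqxx /=.
by rewrite mul0r subr0 mul1r sub0r mul1r mulNr.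
Qed.

Lemma binom_lead (C : nzRingType) (n : nat) (le : rel (mono n)) (a b : mono n) (c : C) :
  a != b -> reflexive le -> le b a -> is_lead_mono le (binom a b c) a.
Proof.
move=> ab refl ba; split => /=.
  by rewrite eqxx (negbTE ab) mul0r subr0 oner_eq0.
by move=> w /binom_proof; rewrite !inE => /orP[] /eqP ->.
Qed.

Lemma mono_eval_mul (C : comNzRingType) (n : nat) (a b : mono n) t :
  mono_eval (mono_mul a b) t = mono_eval a t * mono_eval b t :> C.
Proof.
by rewrite /mono_eval -big_split; apply: eq_bigr => x _; rewrite ffunE exprD.
Qed.

Definition ta (C : numClosedFieldType) (n p : nat) (a : {ffun 'I_n -> 'I_p}) : 'I_n -> C :=
  fun x => omega1 C p ^+ a x.

Definition Aset (C : numClosedFieldType) (n p i : nat) : {set {ffun 'I_n -> 'I_p}} :=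
  [set a | \prod_x ta C a x == omega1 C p ^+ i].

Definition G (C : numClosedFieldType) (n p i : nat) (z : mono n) : C :=
  \sum_(a in Aset C n p i) mono_eval z (ta C a).

Lemma ta_inBj (C : numClosedFieldType) (n p i : nat) a :
  a \in Aset C n p i -> @inBj C n p i (ta C a).
Proof.
rewrite inE => /eqP e; split => // x.
by exists (a x) => //; rewrite subn1 -ltnS prednK // (leq_ltn_trans _ (ltn_ord (a x))).
Qed.

Lemma Aset_card (C : numClosedFieldType) (n p i : nat) :
  (1 <= n)%N -> (i < p)%N -> (0 < #|Aset C n p i|)%N.
Proof.
move=> n1 ip; have p0 : (0 < p)%N by apply: leq_ltn_trans ip.
pose x0 : 'I_n := Ordinal n1.
pose a0 : {ffun 'I_n -> 'I_p} :=
  [ffun x => if x == x0 then Ordinal ip else Ordinal p0].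
apply/card_gt0P; exists a0; rewrite inE (bigD1 x0) //= /ta ffunE eqxx /=.
rewrite big1 ?mulr1 // => x /negbTE xn; by rewrite ffunE xn expr0.
Qed.

Lemma G_zero (C : numClosedFieldType) (n p i : nat) (z : mono n) :
  prime p -> (forall x, p %| z x)%N -> G C p i z = #|Aset C n p i|%:R.
Proof.
move=> pp hz; rewrite /G -sumr_const; apply: eq_bigr => a _.
rewrite /mono_eval big1 // => x _.
rewrite /ta -(exprM (omega1 C p)) mulnC (exprM (omega1 C p)) -(expr_mod _ (omega_pow C pp)).
have -> : (z x %% p = 0)%N by apply/eqP; exact: hz.
by rewrite expr0 expr1n.
Qed.

Lemma G_swap (C : numClosedFieldType) (n p i : nat) (z : mono n) (j l : 'I_n) :
  prime p -> ~~ (z j == z l %[mod p])%N -> G C p i z = 0.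
Proof.
move=> pp hjl.
have p0 := prime_gt0 pp.
set w := omega1 C p.
have wp : w ^+ p = 1 := omega_pow C pp.
have jl : j != l by apply: contra hjl => /eqP ->.
pose d (x : 'I_n) : nat := if x == j then 1%N else if x == l then p.-1 else 0%N.
pose phi (a : {ffun 'I_n -> 'I_p}) : {ffun 'I_n -> 'I_p} :=
  [ffun x => Ordinal (ltn_pmod (a x + d x) p0)].
have phiE a x : ta C (phi a) x = ta C a x * w ^+ d x.
  by rewrite /ta ffunE /= (expr_mod _ wp) exprD.
have prodd : \prod_x w ^+ d x = 1.
  have lj : l != j by rewrite eq_sym.
  rewrite (bigD1 j) //= (bigD1 l) /=; last by [].
  rewrite big1; last first.
    by move=> x /andP[/negbTE xj /negbTE xl]; rewrite /d xj xl expr0.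
  by rewrite /d eqxx (negbTE lj) eqxx mulr1 -exprD add1n prednK.
have phi_inj : injective phi.
  move=> a b /ffunP e; apply/ffunP => x; apply/val_inj.
  move: (e x); rewrite !ffunE => /(congr1 val) /= /eqP.
  by rewrite eqn_modDr !modn_small // => /eqP.
have memphi a : (phi a \in Aset C n p i) = (a \in Aset C n p i).
  rewrite !inE; congr (_ == _).
  by rewrite (eq_bigr _ (fun x _ => phiE a x)) big_split /= prodd mulr1.
pose c := \prod_x (w ^+ d x) ^+ z x.
have Fphi a : mono_eval z (ta C (phi a)) = mono_eval z (ta C a) * c.
  rewrite /mono_eval -big_split; apply: eq_bigr => x _.
  by rewrite phiE exprMn.
have c1 : c != 1.
  have -> : c = w ^+ (z j + p.-1 * z l).
    rewrite /c (bigD1 j) //= (bigD1 l) /=; last by rewrite eq_sym.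
    rewrite big1; last first.
      by move=> x /andP[/negbTE xj /negbTE xl]; rewrite /d xj xl expr0 expr1n.
    rewrite /d eqxx (negbTE (_ : l != j)) ?eqxx ?mulr1; last by rewrite eq_sym.
    by rewrite -!(exprM w) mul1n exprD.
  rewrite -(expr0 w) (eq_prim_root_expr (omega_prim C pp)).
  apply: contra hjl => /eqP h.
  have : ((z j + p.-1 * z l) + z l = 0 + z l %[mod p])%N by rewrite -modnDml h modnDml.
  by rewrite -addnA -mulSnr prednK // addnC mulnC modnMDl add0n => ->.
have e : G C p i z = G C p i z * c.
  rewrite {1}/G (reindex_inj phi_inj) /=.
  rewrite (eq_bigl (fun a => a \in Aset C n p i)) => [|a]; last by rewrite memphi.
  by rewrite (eq_bigr _ (fun a _ => Fphi a)) -mulr_suml.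
apply/eqP; move: e => /eqP; rewrite -subr_eq0 -{1}(mulr1 (G C p i z)) -mulrBr.
by rewrite mulf_eq0 subr_eq0 (eq_sym 1 c) (negbTE c1) orbF.
Qed.

Lemma congr_eq (n p : nat) (le : rel (mono n)) (m w : mono n) :
  (1 <= n)%N -> prime p -> is_term_order le -> Min p le m -> le w m ->
  (forall j l : 'I_n, (w j + p.-1 * m j == w l + p.-1 * m l %[mod p])%N) -> w = m.
Proof.
move=> n1 pp [[refl anti trans tot] [one_min mulc]] [mD mmin] wm hz.
have p0 := prime_gt0 pp.
pose x0 : 'I_n := Ordinal n1.
pose c := (w x0 + p.-1 * m x0)%N.
pose wm' : mono n := [ffun x => w x %% p]%N.
have ltp k : (k %% p <= p - 1)%N by rewrite subn1 -ltnS prednK // ltn_pmod.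
have D' : inD p wm' by move=> x; rewrite ffunE.
have eq' : mono_equiv p m wm'.
  exists (c %% p)%N => // x; rewrite ffunE modn_mod modnDmr.
  have hx := eqP (hz x x0); rewrite -/c in hx.
  rewrite -modnDmr -hx modnDmr.
  have -> : (m x + (w x + p.-1 * m x) = p * m x + w x)%N.
    by rewrite addnCA [(m x + _)%N]addnC -mulSnr prednK // addnC.
  by rewrite mulnC modnMDl.
have h1 := mmin _ D' eq'.
pose q : mono n := [ffun x => w x %/ p * p]%N.
have h2 : le wm' w.
  have := mulc _ _ wm' (one_min q).
  have -> : mono_mul (mono_one n) wm' = wm'.
    by apply/ffunP => x; rewrite !ffunE add0n.
  have -> // : mono_mul q wm' = w.
  by apply/ffunP => x; rewrite !ffunE -divn_eq.
apply: anti; rewrite wm /=.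
exact: trans h1 h2.
Qed.

Theorem mainTheorem7 (C : numClosedFieldType) (n p : nat) (le : rel (mono n)) :
  (1 <= n)%N -> prime p -> (p %| n)%N -> is_term_order le ->
  forall i : nat, (i <= p - 1)%N ->
  forall m : mono n, Sm le (@inBj C n p i) m <-> Min p le m.
Proof.
move=> n1 pp pn hto i ip m.
have [[refl anti trans tot] [one_min mulc]] := hto.
have p0 := prime_gt0 pp.
have ip' : (i < p)%N by rewrite -(prednK p0) ltnS -subn1.
have om0 : omega1 C p != 0 by rewrite (prim_root_eq0 (omega_prim C pp)) -lt0n.
split.
- move=> Sm_m; split.
  + move=> x; rewrite leqNgt; apply/negP => hx; apply: Sm_m.
    have hpx : (p <= m x)%N by move: hx p0; lia.
    pose m2 : mono n := [ffun y => if y == x then m y - p else m y]%N.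
    have mm2 : m != m2.
      apply/eqP => /ffunP /(_ x); rewrite ffunE eqxx => h; move: hpx p0 h; set k := m x; lia.
    exists (binom m m2 1); split.
    * move=> t [tB _]; rewrite binom_eval // mul1r; apply/eqP; rewrite subr_eq0; apply/eqP.
      rewrite /mono_eval; apply: eq_bigr => y _; rewrite ffunE; case: eqP => // ->.
      apply: pow_congr pp _ _; first by have [k _ e] := tB x; exists k.
      by rewrite -{1}(subnK hpx) modnDr.
    * apply: binom_lead mm2 refl _.
      pose q : mono n := [ffun y => if y == x then p else 0]%N.
      have := mulc _ _ m2 (one_min q).
      have -> : mono_mul (mono_one n) m2 = m2 by apply/ffunP => y; rewrite !ffunE add0n.
      have -> // : mono_mul q m2 = m.
      apply/ffunP => y; rewrite !ffunE; case: eqP => [->|]; last by rewrite add0n.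
      by rewrite subnKC.
  + move=> v vD [k kp hv].
    case/orP: (tot m v) => // vm.
    case: (eqVneq m v) => [<-|mv]; first exact: refl.
    exfalso; apply: Sm_m.
    exists (binom m v (omega C p i ^+ k)^-1); split.
    * move=> t [tB tP]; rewrite binom_eval //.
      have -> : mono_eval v t = mono_eval m t * omega C p i ^+ k.
        rewrite -tP -prodrXl /mono_eval -big_split; apply: eq_bigr => y _ /=; rewrite -exprD.
        apply: pow_congr pp _ _; first by have [k' _ e] := tB y; exists k'.
        by rewrite hv.
      rewrite [mono_eval m t * _]mulrC mulrA mulVf ?mul1r ?subrr // expf_neq0 // expf_neq0 //.
    * exact: binom_lead mv refl vm.
- move=> Mm [f [fvan [fm flead]]].
  pose mm' : mono n := [ffun x => p.-1 * m x]%N.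
  have S0 : \sum_(a in Aset C n p i) mpoly_eval f (ta C a) * mono_eval mm' (ta C a) = 0.
    by apply: big1 => a aA; rewrite fvan ?mul0r //; apply: ta_inBj.
  have S1 : \sum_(a in Aset C n p i) mpoly_eval f (ta C a) * mono_eval mm' (ta C a) =
      \sum_(w <- undup (msupp f)) mcoef f w * G C p i (mono_mul w mm').
    rewrite /mpoly_eval.
    under eq_bigr do rewrite mulr_suml.
    rewrite exchange_big /=; apply: eq_bigr => w _; rewrite /G mulr_sumr; apply: eq_bigr => a _.
    by rewrite mono_eval_mul mulrA.
  have mU : m \in undup (msupp f) by rewrite mem_undup; apply: msuppP.
  rewrite S1 (bigD1_seq m mU (undup_uniq _)) /= big1_seq in S0; last first.
    move=> w /andP[wm _].
    case: (eqVneq (mcoef f w) 0) => [-> |fw]; first by rewrite mul0r.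
    have wlm := flead w fw.
    set z := mono_mul w mm'.
    case: (boolP [exists j, exists l, ~~ (z j == z l %[mod p])%N]).
      by case/existsP => j /existsP [l h]; rewrite (G_swap _ _ pp h) mulr0.
    rewrite negb_exists => /forallP H.
    have e := congr_eq n1 pp hto Mm wlm.
    suff : w = m by move=> ew; rewrite ew eqxx in wm.
    apply: e => j l; have := H j; rewrite negb_exists => /forallP /(_ l).
    by rewrite negbK /z !ffunE.
  rewrite addr0 G_zero // in S0; last first.
    by move=> x; rewrite !ffunE -mulSn prednK // dvdn_mulr.
  move/eqP: S0; rewrite mulf_eq0 (negbTE fm) /= pnatr_eq0.
  by move=> /eqP e; move: (@Aset_card C n p i n1 ip'); rewrite e.
Qed.
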